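(* For $\sigma\in\bigwedge^3V_{10}^\vee$, there exists a flag $V_1\subset V_6\subset V_{10}$ with $\sigma(V_1,V_6,V_{10})=0$ if and only if there exists a flag $V_1\subset V_8\subset V_{10}$ with $\sigma(V_1,V_8,V_8)=0$.
   Context: $V_{10}$ is a $10$-dimensional complex vector space; $V_i$ denotes an $i$-dimensional subspace; $\sigma(A,B,C)=0$ means $\sigma(a,b,c)=0$ for all $a\in A,b\in B,c\in C$. *)

(* Defs.v *)
From HB Require Import structures.
From mathcomp Require Import all_boot all_order all_algebra.
From mathcomp Require Import reals.
From mathcomp.real_closed Require Import complex.
Set Implicit Arguments. Unset Strict Implicit. Unset Printing Implicit Defensive.
Import GRing.Theory Num.Theory.
Local Open Scope ring_scope.

(* V10 = row vectors 'rV[C]_10; subspaces of V10 are represented (mxalgebra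
   style) by matrices 'M[C]_10 via their row space. *)

(* sigma : V10 -> V10 -> V10 -> C is an element of /\^3 V10^vee:
   trilinear and alternating. *)
Definition trilinear (C : fieldType) (n : nat)
    (s : 'rV[C]_n -> 'rV[C]_n -> 'rV[C]_n -> C) : Prop :=
  [/\ forall (c : C) x x' y z, s (c *: x + x') y z = c * s x y z + s x' y z,
      forall (c : C) x y y' z, s x (c *: y + y') z = c * s x y z + s x y' z &
      forall (c : C) x y z z', s x y (c *: z + z') = c * s x y z + s x y z'].

Definition alternating3 (C : fieldType) (n : nat)
    (s : 'rV[C]_n -> 'rV[C]_n -> 'rV[C]_n -> C) : Prop :=
  [/\ forall x z, s x x z = 0, forall x y, s x y x = 0 &
      forall x y, s y x x = 0].

Definition is_3form (C : fieldType) (n : nat)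
    (s : 'rV[C]_n -> 'rV[C]_n -> 'rV[C]_n -> C) : Prop :=
  trilinear s /\ alternating3 s.

Definition vanishes_on (C : fieldType) (n p q r : nat)
    (s : 'rV[C]_n -> 'rV[C]_n -> 'rV[C]_n -> C)
    (A : 'M[C]_(p, n)) (B : 'M[C]_(q, n)) (D : 'M[C]_(r, n)) : Prop :=
  forall a b d, (a <= A)%MS -> (b <= B)%MS -> (d <= D)%MS -> s a b d = 0.

(* Main.v *)
Require Import Defs.
From HB Require Import structures.
From mathcomp Require Import all_boot all_order all_algebra.
From mathcomp Require Import reals.
From mathcomp.real_closed Require Import complex.
From mathcomp Require Import zify.
Set Implicit Arguments. Unset Strict Implicit. Unset Printing Implicit Defensive.
Import GRing.Theory Num.Theory.
Local Open Scope ring_scope.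
Section LA.
Variable F : fieldType.

Lemma rank_add_row n m (A : 'M[F]_(m, n)) (u : 'rV_n) :
  ~~ (u <= A)%MS -> \rank (A + u)%MS = (\rank A).+1.
Proof.
move=> nuA.
have u0 : u != 0 by apply: contra nuA => /eqP ->; rewrite sub0mx.
have ru : \rank u = 1%N by rewrite rank_rV u0.
have rc : \rank (A :&: u)%MS = 0%N.
  have le1 := mxrankS (capmxSr A u); rewrite ru in le1.
  case: (\rank (A :&: u)%MS) le1 (mxrank_leqif_sup (capmxSr A u)) => [|[|//]] // _ H.
  exfalso; move: nuA; rewrite ru in H.
  have: (u <= A :&: u)%MS by rewrite -(geq_leqif H).
  by rewrite sub_capmx => /andP[->].
by have := mxrank_sum_cap A u; rewrite rc ru addn0 addn1.
Qed.

Lemma extend_sub n k : forall d m (A : 'M[F]_(m, n)) (B : 'M[F]_n),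
  (A <= B)%MS -> k = (\rank A + d)%N -> (k <= \rank B)%N ->
  exists C : 'M[F]_n, [/\ (A <= C)%MS, (C <= B)%MS & \rank C = k].
Proof.
elim=> [|d IH] m A B sAB Ek kB.
  by exists <<A>>%MS; rewrite !genmxE Ek addn0 sAB.
have : ~~ (B <= A)%MS.
  apply/negP => /mxrankS; rewrite leqNgt; move/negP; apply.
  by apply: leq_trans kB; rewrite Ek addnS ltnS leq_addr.
case/row_subPn => i ni.
have e := rank_add_row ni.
have [||C [h1 h2 h3]] := IH _ (A + row i B)%MS B (_ : _) _ kB.
- by rewrite addsmx_sub sAB row_sub.
- by rewrite Ek e addSnnS.
by exists C; split => //; apply: submx_trans h1; apply: addsmxSl.
Qed.


Variables (n : nat) (M : 'M[F]_n).
Hypothesis tM : M^T = - M.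
Hypothesis altM : forall x : 'rV[F]_n, x *m M *m x^T = 0.

Definition orth m1 m2 (A : 'M[F]_(m1, n)) (B : 'M[F]_(m2, n)) :=
  A *m M *m B^T = 0.

Lemma orth_sym m1 m2 (A : 'M[F]_(m1, n)) (B : 'M[F]_(m2, n)) :
  orth A B -> orth B A.
Proof.
rewrite /orth => H.
have : (A *m M *m B^T)^T = 0 by rewrite H trmx0.
by rewrite !trmx_mul trmxK tM mulNmx mulmxN mulmxA => /eqP; rewrite oppr_eq0 => /eqP.
Qed.

Lemma orth_addsl m1 m2 m3 (A : 'M[F]_(m1, n)) (B : 'M[F]_(m2, n)) (C : 'M[F]_(m3, n)) :
  orth A C -> orth B C -> orth (A + B)%MS C.
Proof.
rewrite /orth => hA hB.
have : ((A + B)%MS <= col_mx A B)%MS by rewrite -addsmxE.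
case/submxP => D ->.
by rewrite -!mulmxA mul_col_mx !mulmxA hA hB col_mx0 mulmx0.
Qed.

Lemma orth_addsr m1 m2 m3 (A : 'M[F]_(m1, n)) (B : 'M[F]_(m2, n)) (C : 'M[F]_(m3, n)) :
  orth C A -> orth C B -> orth C (A + B)%MS.
Proof. by move=> /orth_sym h1 /orth_sym h2; apply: orth_sym; apply: orth_addsl. Qed.

Lemma dir12 (V6 : 'M[F]_n) : V6 *m M = 0 -> (\rank V6 + 3 <= n)%N ->
  exists V8 : 'M[F]_n, [/\ (V6 <= V8)%MS, \rank V8 = (\rank V6 + 2)%N & orth V8 V8].
Proof.
move=> V6M rk.
have : ~~ (1%:M <= V6)%MS.
  by apply/negP => /mxrankS; rewrite mxrank1; lia.
case/row_subPn => i ni; set u := row i 1%:M in ni.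
set U := (V6 + u)%MS.
have rU : \rank U = (\rank V6).+1 by apply: rank_add_row.
set W := kermx (M *m u^T).
have rW : (n.-1 <= \rank W)%N.
  rewrite mxrank_ker; have := rank_leq_col (M *m u^T); lia.
have : ~~ (W <= U)%MS.
  by apply/negP => /mxrankS; rewrite rU; lia.
case/row_subPn => j nj; set w := row j W in nj.
exists (U + w)%MS; split.
- by apply: submx_trans (addsmxSl _ _); apply: addsmxSl.
- by rewrite rank_add_row // rU addn2.
have oV m (Y : 'M[F]_(m, n)) : orth V6 Y by rewrite /orth V6M mul0mx.
have ouu : orth u u by apply: altM.
have oww : orth w w by apply: altM.
have owu : orth w u.
  by rewrite /orth -mulmxA; apply/sub_kermxP; apply: row_sub.
have ouw := orth_sym owu.
have oX m (Y : 'M[F]_(m, n)) : orth Y V6 by apply: orth_sym.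
apply: orth_addsl; first apply: orth_addsl.
- by apply: orth_addsr; [apply: orth_addsr|].
- by apply: orth_addsr; [apply: orth_addsr|].
- by apply: orth_addsr; [apply: orth_addsr|].
Qed.

Lemma dir21 (V8 : 'M[F]_n) (v : 'rV[F]_n) (k : nat) :
  orth V8 V8 -> (v <= V8)%MS -> v *m M = 0 ->
  (k + n <= 2 * \rank V8)%N -> (\rank v <= k)%N ->
  exists V6 : 'M[F]_n, [/\ (v <= V6)%MS, V6 *m M = 0 & \rank V6 = k].
Proof.
move=> o8 v8 vM rk rv.
set K := (V8 :&: kermx M)%MS.
have h1 := mxrank_mul_ker V8 M.
have h2 : (\rank (V8 *m M) <= n - \rank V8)%N.
  rewrite -(mxrank_tr V8) -mxrank_ker; apply: mxrankS; apply/sub_kermxP; exact: o8.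
have rV8 := rank_leq_col V8.
have [|||C [c1 c2 c3]] := @extend_sub n k (k - \rank v) _ v K.
- by rewrite sub_capmx v8; apply/sub_kermxP.
- lia.
- rewrite /K; lia.
exists C; split => //.
by apply/sub_kermxP; apply: submx_trans c2 (capmxSr _ _).
Qed.

End LA.
Section Sig.
Variables (F : fieldType) (n : nat) (s : 'rV[F]_n -> 'rV[F]_n -> 'rV[F]_n -> F).
Hypothesis Hs : is_3form s.

Lemma s_add2 x y y' z : s x (y + y') z = s x y z + s x y' z.
Proof. by case: Hs => [[_ h _] _]; rewrite -[y]scale1r h mul1r scale1r. Qed.
Lemma s_add3 x y z z' : s x y (z + z') = s x y z + s x y z'.
Proof. by case: Hs => [[_ _ h] _]; rewrite -[z]scale1r h mul1r scale1r. Qed.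
Lemma s_0_1 y z : s 0 y z = 0.
Proof.
case: Hs => [[h _ _] _]; have := h (-1) 0 0 y z.
by rewrite scaler0 addr0 mulN1r addNr.
Qed.
Lemma s_0_2 x z : s x 0 z = 0.
Proof.
case: Hs => [[_ h _] _]; have := h (-1) x 0 0 z.
by rewrite scaler0 addr0 mulN1r addNr.
Qed.
Lemma s_0_3 x y : s x y 0 = 0.
Proof.
case: Hs => [[_ _ h] _]; have := h (-1) x y 0 0.
by rewrite scaler0 addr0 mulN1r addNr.
Qed.
Lemma s_scale1 c x y z : s (c *: x) y z = c * s x y z.
Proof. by case: Hs => [[h _ _] _]; have := h c x 0 y z; rewrite addr0 s_0_1 addr0. Qed.
Lemma s_scale2 c x y z : s x (c *: y) z = c * s x y z.
Proof. by case: Hs => [[_ h _] _]; have := h c x y 0 z; rewrite addr0 s_0_2 addr0. Qed.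
Lemma s_scale3 c x y z : s x y (c *: z) = c * s x y z.
Proof. by case: Hs => [[_ _ h] _]; have := h c x y z 0; rewrite addr0 s_0_3 addr0. Qed.

Lemma s_sum2 x z (G : 'I_n -> 'rV[F]_n) :
  s x (\sum_i G i) z = \sum_i s x (G i) z.
Proof. by apply: (big_morph (fun y => s x y z)) => [y y'|]; [apply: s_add2|apply: s_0_2]. Qed.
Lemma s_sum3 x y (G : 'I_n -> 'rV[F]_n) :
  s x y (\sum_i G i) = \sum_i s x y (G i).
Proof. by apply: (big_morph (fun z => s x y z)) => [z z'|]; [apply: s_add3|apply: s_0_3]. Qed.

Definition Mof v : 'M[F]_n := \matrix_(i, j) s v (delta_mx 0 i) (delta_mx 0 j).

Lemma sM v x y : s v x y = (x *m Mof v *m y^T) 0 0.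
Proof.
rewrite {1}(row_sum_delta x) {1}(row_sum_delta y) s_sum2 mxE.
under eq_bigr do rewrite s_scale2 s_sum3 mulr_sumr.
under [RHS]eq_bigr do rewrite !mxE mulr_suml.
rewrite exchange_big /=; apply: eq_bigr => i _; apply: eq_bigr => j _.
by rewrite s_scale3 /Mof mxE [y 0 i * _]mulrC mulrA.
Qed.


Lemma s_alt x y : s x y y = 0.
Proof. by case: Hs => [_ [_ _ h]]; apply: h. Qed.
Lemma s_alt1 x z : s x x z = 0.
Proof. by case: Hs => [_ [h _ _]]; apply: h. Qed.

Lemma s_anti x y z : s x y z = - s x z y.
Proof.
have := s_alt x (y + z).
rewrite s_add2 !s_add3 !s_alt add0r addr0 => /eqP; rewrite addr_eq0 => /eqP //.
Qed.

Lemma tMof v : (Mof v)^T = - Mof v.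
Proof. by apply/matrixP => i j; rewrite !mxE s_anti. Qed.

Lemma altMof v (x : 'rV[F]_n) : x *m Mof v *m x^T = 0.
Proof. by apply/matrixP => i j; rewrite !ord1 [RHS]mxE -sM s_alt. Qed.

Lemma entry_delta m (A : 'M[F]_(m, n)) i j : (A *m (delta_mx 0 j : 'rV[F]_n)^T) i 0 = A i j.
Proof. by rewrite trmx_delta -colE mxE. Qed.

Lemma vMof v : v *m Mof v = 0.
Proof. by apply/matrixP => i j; rewrite ord1 [RHS]mxE -entry_delta -sM s_alt1. Qed.

Lemma rows_zero v m (V : 'M[F]_(m, n)) :
  (forall b d, (b <= V)%MS -> s v b d = 0) -> V *m Mof v = 0.
Proof.
move=> H; apply/row_matrixP => i; rewrite row_mul row0.
apply/matrixP => a j; rewrite ord1 [RHS]mxE -entry_delta -sM; apply: H; apply: row_sub.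
Qed.

Lemma entry_mulT m1 m2 (A : 'M[F]_(m1, n)) (B : 'M[F]_(m2, n)) i j :
  (A *m B^T) i j = (row i A *m (row j B)^T) 0 0.
Proof. by rewrite !mxE; apply: eq_bigr => k _; rewrite !mxE. Qed.

Lemma orth_of v m (V : 'M[F]_(m, n)) :
  (forall b d, (b <= V)%MS -> (d <= V)%MS -> s v b d = 0) -> V *m Mof v *m V^T = 0.
Proof.
move=> H; apply/matrixP => i j; rewrite entry_mulT row_mul [RHS]mxE -sM.
by apply: H; apply: row_sub.
Qed.

Lemma of_orth v m (V : 'M[F]_(m, n)) b d :
  V *m Mof v *m V^T = 0 -> (b <= V)%MS -> (d <= V)%MS -> s v b d = 0.
Proof.
move=> H /submxP[D ->] /submxP[E ->]; rewrite sM.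
have -> : D *m V *m Mof v *m (E *m V)^T = D *m (V *m Mof v *m V^T) *m E^T.
  by rewrite trmx_mul !mulmxA.
by rewrite H mulmx0 mul0mx mxE.
Qed.

Lemma of_zero v m (V : 'M[F]_(m, n)) b d :
  V *m Mof v = 0 -> (b <= V)%MS -> s v b d = 0.
Proof. by move=> H /submxP[D ->]; rewrite sM -(mulmxA D) H mulmx0 !mul0mx mxE. Qed.

End Sig.

Lemma get_v (F : fieldType) n (V1 : 'M[F]_n) : \rank V1 = 1%N ->
  exists v : 'rV[F]_n, [/\ (v <= V1)%MS, \rank v = 1%N &
     forall a, (a <= V1)%MS -> exists c, a = c *: v].
Proof.
move=> r1.
have : ~~ (V1 <= (0 : 'M[F]_n))%MS by rewrite submx0 -mxrank_eq0 r1.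
case/row_subPn => i; rewrite submx0 => nz.
have vV1 := row_sub i V1.
have rv : \rank (row i V1) = 1%N by rewrite rank_rV nz.
exists (row i V1); split => // a aV1.
have V1v : (V1 <= row i V1)%MS.
  by rewrite -(mxrank_leqif_sup vV1).2 rv r1.
have /submxP[D ->] := submx_trans aV1 V1v.
by exists (D 0 0); rewrite {1}(mx11_scalar D) mul_scalar_mx.
Qed.

Theorem lemma4p1 (R : realType)
    (sigma : 'rV[R[i]]_10 -> 'rV[R[i]]_10 -> 'rV[R[i]]_10 -> R[i]) :
  is_3form sigma ->
  ((exists (V1 V6 : 'M[R[i]]_10),
      [/\ \rank V1 = 1%N, \rank V6 = 6%N, (V1 <= V6)%MS &
          vanishes_on sigma V1 V6 (1%:M : 'M[R[i]]_10)])
   <->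
   (exists (V1 V8 : 'M[R[i]]_10),
      [/\ \rank V1 = 1%N, \rank V8 = 8%N, (V1 <= V8)%MS &
          vanishes_on sigma V1 V8 V8])).
Proof.
move=> Hs; split.
- case=> V1 [V6 [r1 r6 s16 van]].
  have [v [vV1 rv sc]] := get_v r1.
  have V6M : V6 *m Mof sigma v = 0.
    by apply: (rows_zero Hs) => b d bV; apply: van => //; apply: submx1.
  have [|V8 [s68 r8 o8]] := dir12 (tMof Hs v) (altMof Hs v) V6M.
    by rewrite r6.
  exists V1, V8; split => //.
  + by rewrite r8 r6.
  + exact: submx_trans s16 s68.
  move=> a b d aV bV dV; have [c ->] := sc a aV.
  by rewrite (s_scale1 Hs) (of_orth Hs o8 bV dV) mulr0.
- case=> V1 [V8 [r1 r8 s18 van]].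
  have [v [vV1 rv sc]] := get_v r1.
  have o8 : V8 *m Mof sigma v *m V8^T = 0.
    by apply: (orth_of Hs) => b d bV dV; apply: van.
  have [||V6 [v6 V6M r6]] := @dir21 _ _ _ _ _ 6 o8
     (submx_trans vV1 s18) (vMof Hs v).
  + by rewrite r8.
  + by rewrite rv.
  exists V1, V6; split => //.
  + have V1v : (V1 <= v)%MS by rewrite -(mxrank_leqif_sup vV1).2 rv r1.
    exact: submx_trans V1v v6.
  move=> a b d aV bV dV; have [c ->] := sc a aV.
  by rewrite (s_scale1 Hs) (of_zero Hs d V6M bV) mulr0.
Qed.
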